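(* Let $A$ be a semiprime algebra whose commutator is commutative and distributive w.r.t. arbitrary joins. Then for every $\theta\in\mathrm{Con}(A)$, $\theta^\perp=\bigcap\big(V_A(\theta^\perp)\cap\mathrm{Min}(A)\big)$ (with the intersection of the empty family being $\nabla_A$).
   Context: Let $A$ be an algebra of a fixed signature. $\mathrm{Con}(A)$ is the complete lattice of congruences of $A$, with bottom $\Delta_A=\{(a,a):a\in A\}$ and top $\nabla_A=A^2$. For $\alpha,\beta,\mu\in\mathrm{Con}(A)$, write $C(\alpha,\beta;\mu)$ if for all $n,k\in\mathbb N$, every term $t$ of arity $n+k$, all $(a_i,b_i)\in\alpha$ ($1\le i\le n$) and all $(c_j,d_j)\in\beta$ ($1\le j\le k$): $(t^A(a_1,\dots,a_n,c_1,\dots,c_k),t^A(a_1,\dots,a_n,d_1,\dots,d_k))\in\mu$ iff $(t^A(b_1,\dots,b_n,c_1,\dots,c_k),t^A(b_1,\dots,b_n,d_1,\dots,d_k))\in\mu$. The (term condition) commutator is $[\alpha,\beta]_A=\bigcap\{\mu\in\mathrm{Con}(A): C(\alpha,\beta;\mu)\}$; it satisfies $[\alpha,\beta]_A\subseteq\alpha\cap\beta$ and is monotone in each argument. ''The commutator of $A$ is commutative and distributive w.r.t. arbitrary joins'' means $[\alpha,\beta]_A=[\beta,\alpha]_A$ and $[\bigvee_{i\in I}\alpha_i,\beta]_A=\bigvee_{i\in I}[\alpha_i,\beta]_A$ for all $\alpha,\beta$ and all families $(\alpha_i)_{i\in I}$ in $\mathrm{Con}(A)$. A congruence $\phi\neq\nabla_A$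 is prime if for all $\alpha,\beta\in\mathrm{Con}(A)$, $[\alpha,\beta]_A\subseteq\phi$ implies $\alpha\subseteq\phi$ or $\beta\subseteq\phi$; $\mathrm{Spec}(A)$ is the set of prime congruences and $\mathrm{Min}(A)$ the set of minimal elements of $(\mathrm{Spec}(A),\subseteq)$. For $\theta\in\mathrm{Con}(A)$: $V_A(\theta)=\{\phi\in\mathrm{Spec}(A):\theta\subseteq\phi\}$ and $\rho_A(\theta)=\bigcap V_A(\theta)$ (the intersection of the empty family being $\nabla_A$). $A$ is semiprime if $\rho_A(\Delta_A)=\Delta_A$. For $\beta,\gamma\in\mathrm{Con}(A)$: $\beta\to\gamma=\bigvee\{\alpha\in\mathrm{Con}(A):[\alpha,\beta]_A\subseteq\gamma\}$ and $\beta^\perp=\beta\to\Delta_A$. *)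

(* Defs.v *)
From mathcomp Require Import ssreflect ssrfun ssrbool eqtype ssrnat fintype.

Set Implicit Arguments.
Unset Strict Implicit.

(* An algebra is a carrier A together with an
   interpretation op f : (('I_(ar f)) -> A) -> A of every symbol. *)

Inductive term (F : Type) (ar : F -> nat) (X : Type) : Type :=
  | Var : X -> term ar X
  | App : forall f : F, ('I_(ar f) -> term ar X) -> term ar X.

Arguments Var {F ar X} _.
Arguments App {F ar X} f _.

(* Binary relations on A; congruences are represented as relations. *)
Definition rel_on (A : Type) := A -> A -> Prop.

Definition rsub (A : Type) (r s : rel_on A) : Prop := forall x y, r x y -> s x y.
Definition req (A : Type) (r s : rel_on A) : Prop := forall x y, r x y <-> s x y.

Section UA.
Variables (F : Type) (ar : F -> nat) (A : Type)
          (op : forall f : F, ('I_(ar f) -> A) -> A).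

Fixpoint teval (X : Type) (v : X -> A) (t : term ar X) : A :=
  match t with
  | Var x => v x
  | App f ts => op (fun i => teval v (ts i))
  end.

Definition is_cong (r : rel_on A) : Prop :=
  (forall x, r x x) /\ (forall x y, r x y -> r y x) /\
  (forall x y z, r x y -> r y z -> r x z) /\
  (forall (f : F) (u w : 'I_(ar f) -> A),
      (forall i, r (u i) (w i)) -> r (op u) (op w)).

Definition Delta : rel_on A := fun x y => x = y.
Definition Nabla : rel_on A := fun _ _ => True.

(* arbitrary intersection of the congruences satisfying P (Nabla if none) *)
Definition cmeet (P : rel_on A -> Prop) : rel_on A :=
  fun x y => forall mu, P mu -> mu x y.

Definition cjoin (I : Type) (al : I -> rel_on A) : rel_on A :=
  cmeet (fun mu => is_cong mu /\ forall i, rsub (al i) mu).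

(* term condition C(alpha, beta; mu); a term of arity n+k is a term over the
   variables 'I_n + 'I_k *)
Definition TC (alpha beta mu : rel_on A) : Prop :=
  forall (n k : nat) (t : term ar ('I_n + 'I_k)%type)
         (a b : 'I_n -> A) (c d : 'I_k -> A),
    (forall i, alpha (a i) (b i)) -> (forall j, beta (c j) (d j)) ->
    (mu (teval (fun z => match z with inl i => a i | inr j => c j end) t)
        (teval (fun z => match z with inl i => a i | inr j => d j end) t)
     <->
     mu (teval (fun z => match z with inl i => b i | inr j => c j end) t)
        (teval (fun z => match z with inl i => b i | inr j => d j end) t)).

Definition comm (alpha beta : rel_on A) : rel_on A :=
  cmeet (fun mu => is_cong mu /\ TC alpha beta mu).

Definition comm_commutative : Prop :=
  forall alpha beta, is_cong alpha -> is_cong beta ->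
    req (comm alpha beta) (comm beta alpha).

Definition comm_join_distributive : Prop :=
  forall (I : Type) (al : I -> rel_on A) (beta : rel_on A),
    (forall i, is_cong (al i)) -> is_cong beta ->
    req (comm (cjoin al) beta) (cjoin (fun i => comm (al i) beta)).

Definition is_prime (phi : rel_on A) : Prop :=
  is_cong phi /\ ~ req phi Nabla /\
  forall alpha beta, is_cong alpha -> is_cong beta ->
    rsub (comm alpha beta) phi -> rsub alpha phi \/ rsub beta phi.

Definition is_min_prime (phi : rel_on A) : Prop :=
  is_prime phi /\ forall psi, is_prime psi -> rsub psi phi -> req psi phi.

Definition VA (theta phi : rel_on A) : Prop := is_prime phi /\ rsub theta phi.

Definition rhoA (theta : rel_on A) : rel_on A := cmeet (VA theta).

Definition semiprime : Prop := req (rhoA Delta) Delta.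

Definition carrow (beta gamma : rel_on A) : rel_on A :=
  cjoin (fun al : {alpha : rel_on A | is_cong alpha /\ rsub (comm alpha beta) gamma}
           => proj1_sig al).

Definition cperp (beta : rel_on A) : rel_on A := carrow beta Delta.

End UA.

(* Main.v *)
Require Import Defs.
From mathcomp Require Import ssreflect ssrfun ssrbool eqtype ssrnat fintype.
From mathcomp Require Import boolp classical_sets.
From Stdlib Require Import Classical.

Set Implicit Arguments.
Unset Strict Implicit.

Lemma teval_cong F (ar : F -> nat) A (op : forall f : F, ('I_(ar f) -> A) -> A)
  (r : rel_on A) X (v w : X -> A) (t : term ar X) :
  is_cong op r -> (forall z, r (v z) (w z)) -> r (teval op v t) (teval op w t).
Proof.
move=> [_ [_ [_ Hop]]] Hvw; elim: t => [x|f ts IH] /=; first exact: Hvw.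
apply: Hop => i; exact: IH.
Qed.

Lemma cmeet_cong F (ar : F -> nat) A (op : forall f : F, ('I_(ar f) -> A) -> A)
  (P : rel_on A -> Prop) :
  (forall mu, P mu -> is_cong op mu) -> is_cong op (cmeet P).
Proof.
move=> HP; split; [|split; [|split]].
- by move=> x mu /HP [].
- by move=> x y H mu Pm; case: (HP _ Pm) => _ [Hs _]; apply: Hs; apply: H.
- move=> x y z H1 H2 mu Pm; case: (HP _ Pm) => _ [_ [Ht _]].
  exact: Ht (H1 _ Pm) (H2 _ Pm).
- move=> f u w H mu Pm; case: (HP _ Pm) => _ [_ [_ Hop]]; apply: Hop => i; exact: H.
Qed.

Lemma comm_sub_l F (ar : F -> nat) A (op : forall f : F, ('I_(ar f) -> A) -> A)
  alpha beta : is_cong op alpha -> is_cong op beta -> rsub (comm op alpha beta) alpha.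
Proof.
move=> ca cb x y H; apply: H; split=> //.
move=> n k t a b c d Hab Hcd.
have [Ar [As [At _]]] := ca.
have E : forall e : 'I_k -> A,
  alpha (teval op (fun z => match z with inl i => a i | inr j => e j end) t)
        (teval op (fun z => match z with inl i => b i | inr j => e j end) t).
  by move=> e; apply: teval_cong => // -[i|j]; [apply: Hab| apply: Ar].
split=> H.
- eapply At; [eapply As; exact: E| eapply At; [exact: H| exact: E]].
- eapply At; [exact: E| eapply At; [exact: H| eapply As; exact: E]].
Qed.

Lemma comm_sub_r F (ar : F -> nat) A (op : forall f : F, ('I_(ar f) -> A) -> A)
  alpha beta : is_cong op alpha -> is_cong op beta -> rsub (comm op alpha beta) beta.
Proof.
move=> ca cb x y H; apply: H; split=> //.
move=> n k t a b c d Hab Hcd.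
have [Br _] := cb.
have E : forall a0 : 'I_n -> A,
  beta (teval op (fun z => match z with inl i => a0 i | inr j => c j end) t)
       (teval op (fun z => match z with inl i => a0 i | inr j => d j end) t).
  by move=> a0; apply: teval_cong => // -[i|j]; [apply: Br| apply: Hcd].
by split=> _; apply: E.
Qed.

Lemma Delta_cong F (ar : F -> nat) A (op : forall f : F, ('I_(ar f) -> A) -> A) :
  is_cong op (@Delta A).
Proof.
split; [by []|split; [by move=> x y ->|split; [by move=> x y z -> ->|]]].
move=> f u w H; have -> : u = w by apply: funext.
by [].
Qed.

Lemma cperp_cong F (ar : F -> nat) A (op : forall f : F, ('I_(ar f) -> A) -> A) theta :
  is_cong op (cperp op theta).
Proof. by apply: cmeet_cong => mu []. Qed.

Lemma comm_perp F (ar : F -> nat) A (op : forall f : F, ('I_(ar f) -> A) -> A) theta :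
  comm_join_distributive op -> is_cong op theta ->
  rsub (comm op (cperp op theta) theta) (@Delta A).
Proof.
move=> D ct.
have HD := D _ (fun al : {alpha : rel_on A | is_cong op alpha /\
                         rsub (comm op alpha theta) (@Delta A)} => proj1_sig al)
            theta (fun i => proj1 (proj2_sig i)) ct.
move=> x y /(proj1 (HD x y)) H.
apply: H; split; first exact: Delta_cong.
move=> i; exact: (proj2 (proj2_sig i)).
Qed.

Lemma chain_prime F (ar : F -> nat) A (op : forall f : F, ('I_(ar f) -> A) -> A)
  (Q : rel_on A -> Prop) (p0 : rel_on A) :
  Q p0 -> (forall p, Q p -> is_prime op p) ->
  (forall p q, Q p -> Q q -> rsub p q \/ rsub q p) ->
  is_prime op (cmeet Q).
Proof.
move=> Q0 QP Qch; split; [|split].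
- by apply: cmeet_cong => mu /QP [].
- move=> E; have [_ [NN _]] := QP _ Q0; apply: NN => x y; split=> // _.
  exact: (proj2 (E x y) I) p0 Q0.
- move=> al be ca cb Hsub.
  case: (classic (rsub al (cmeet Q))) => Ha; first by left.
  case: (classic (rsub be (cmeet Q))) => Hb; first by right.
  exfalso.
  have [p1 [Qp1 Np1]] : exists p, Q p /\ ~ rsub al p.
    apply: NNPP => Hn; apply: Ha => x y H mu Qmu.
    apply: NNPP => Hm; apply: Hn; exists mu; split => // Hs; apply: Hm; exact: Hs _ _ H.
  have [p2 [Qp2 Np2]] : exists p, Q p /\ ~ rsub be p.
    apply: NNPP => Hn; apply: Hb => x y H mu Qmu.
    apply: NNPP => Hm; apply: Hn; exists mu; split => // Hs; apply: Hm; exact: Hs _ _ H.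
  have Hs1 : rsub (comm op al be) p1 := fun x y H => Hsub x y H p1 Qp1.
  have Hs2 : rsub (comm op al be) p2 := fun x y H => Hsub x y H p2 Qp2.
  case: (Qch _ _ Qp1 Qp2) => S12.
  + have [_ [_ Pr]] := QP _ Qp1.
    case: (Pr _ _ ca cb Hs1) => // Hbe.
    apply: Np2 => x y H; apply: S12; exact: Hbe _ _ H.
  + have [_ [_ Pr]] := QP _ Qp2.
    case: (Pr _ _ ca cb Hs2) => // Hal.
    apply: Np1 => x y H; apply: S12; exact: Hal _ _ H.
Qed.

Lemma min_prime_below F (ar : F -> nat) A (op : forall f : F, ('I_(ar f) -> A) -> A)
  phi : is_prime op phi -> exists psi, is_min_prime op psi /\ rsub psi phi.
Proof.
move=> Pphi.
pose T := {p : rel_on A | is_prime op p /\ rsub p phi}.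
pose R := fun s t : T => `[< rsub (proj1_sig t) (proj1_sig s) >].
have Z1 : forall s, R s s.
  by move=> s; apply/asboolP => x y.
have Z2 : forall r s t, R r s -> R s t -> R r t.
  move=> r s t /asboolP H1 /asboolP H2; apply/asboolP => x y H; exact: H1 _ _ (H2 _ _ H).
have Z3 : forall s t, R s t -> R t s -> s = t.
  move=> [s Ps] [t Pt] /asboolP H1 /asboolP H2 /=.
  have E : s = t.
    apply: funext => x; apply: funext => y; apply: propext; split; [apply: H2|apply: H1].
  subst t; congr exist; exact: Prop_irrelevance.
have Z4 : forall C : set T, total_on C R -> exists t, forall s, C s -> R s t.
  move=> C Ctot.
  pose Q := fun r => r = phi \/ exists a, C a /\ proj1_sig a = r.
  have Qpr : forall p, Q p -> is_prime op p.
    by move=> p [->|[a [_ <-]]] //; case: (proj2_sig a).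
  have Qch : forall p q, Q p -> Q q -> rsub p q \/ rsub q p.
    move=> p q Qp Qq.
    case: Qp => [->|[a [Ca <-]]]; case: Qq => [->|[b [Cb <-]]].
    + by left.
    + by right; exact: (proj2 (proj2_sig b)).
    + by left; exact: (proj2 (proj2_sig a)).
    + by case: (Ctot _ _ Ca Cb) => /asboolP H; [right|left]; exact: H.
  have Pm := chain_prime (or_introl erefl) Qpr Qch.
  have Sm : rsub (cmeet Q) phi := fun x y H => H phi (or_introl erefl).
  exists (exist _ (cmeet Q) (conj Pm Sm)) => s Cs; apply/asboolP => x y H.
  exact: H _ (or_intror (ex_intro _ s (conj Cs erefl))).
have [[psi [Ppsi Spsi]] Hmax] := Zorn Z1 Z2 Z3 Z4.
  exists psi; split => //; split => // psi' Ppsi' Sub.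
  have := Hmax (exist _ psi' (conj Ppsi' (fun x y H => Spsi _ _ (Sub _ _ H)))).
  move=> H.
  have /H E : R (exist _ psi (conj Ppsi Spsi))
     (exist _ psi' (conj Ppsi' (fun x y H => Spsi _ _ (Sub _ _ H)))).
    by apply/asboolP.
  by injection E => ->.
Qed.

Unset Implicit Arguments.

Theorem mainTheorem9 (F : Type) (ar : F -> nat) (A : Type)
    (op : forall f : F, ('I_(ar f) -> A) -> A) :
  semiprime op ->
  comm_commutative op ->
  comm_join_distributive op ->
  forall theta : rel_on A, is_cong op theta ->
    req (cperp op theta)
        (cmeet (fun phi => VA op (cperp op theta) phi /\ is_min_prime op phi)).
Proof.
move=> SP _ D theta ct.
set P := (fun phi => VA op (cperp op theta) phi /\ is_min_prime op phi).
have cal : is_cong op (cmeet P).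
  by apply: cmeet_cong => mu [[[]]].
have Hc : rsub (comm op (cmeet P) theta) (@Delta A).
  move=> u v H; apply: (proj1 (SP u v)) => phi [Pphi _].
  case: (classic (rsub theta phi)) => Ht.
  - exact: Ht _ _ (comm_sub_r cal ct H).
  - have [psi [Mpsi Spsi]] := min_prime_below Pphi.
    have Ntp : ~ rsub theta psi.
      by move=> Hs; apply: Ht => a b h; exact: Spsi _ _ (Hs _ _ h).
    have [cpsi [_ Prpsi]] := proj1 Mpsi.
    have Hperp : rsub (cperp op theta) psi.
      case: (Prpsi _ _ (cperp_cong op theta) ct) => //.
      move=> a b /(comm_perp D ct) ->; exact: (proj1 cpsi).
    apply: Spsi; exact: (comm_sub_l cal ct H) psi (conj (conj (proj1 Mpsi) Hperp) Mpsi).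
move=> x y; split.
- by move=> H phi [[_ Hs] _]; exact: Hs _ _ H.
- move=> Hal mu [cmu Hmu]; exact: Hmu (exist _ (cmeet P) (conj cal Hc)) x y Hal.
Qed.
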